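(* Let $\mathfrak n$ be a finite-dimensional real non-singular 2-step nilpotent Lie algebra. Then $\mathfrak n$ admits no ad-invariant metric.
   Context: An ad-invariant metric on a Lie algebra $\mathfrak g$ is a non-degenerate symmetric bilinear form $\langle\,,\,\rangle$ on $\mathfrak g$ (not necessarily positive definite) satisfying $\langle [x,y],z\rangle+\langle y,[x,z]\rangle=0$ for all $x,y,z\in\mathfrak g$. A Lie algebra $\mathfrak n$ is 2-step nilpotent if $[\mathfrak n,\mathfrak n]\neq 0$ and $[\mathfrak n,[\mathfrak n,\mathfrak n]]=0$; then $\mathrm{ad}_x$ maps $\mathfrak n$ into the center $\mathfrak z$ of $\mathfrak n$ for every $x$. A 2-step nilpotent Lie algebra $\mathfrak n$ with center $\mathfrak z$ is called non-singular if for every $x\in\mathfrak n\setminus\mathfrak z$ the map $\mathrm{ad}_x:\mathfrak n\to\mathfrak z$ is surjective. *)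

(* Defs.v *)
From HB Require Import structures.
From mathcomp Require Import all_boot all_order all_algebra.
From mathcomp Require Import reals.
Set Implicit Arguments. Unset Strict Implicit. Unset Printing Implicit Defensive.
Import Order.TTheory GRing.Theory Num.Theory.
Local Open Scope ring_scope.

Section LieDefs.
Variables (R : realType) (V : vectType R).

Definition is_lie_bracket (br : V -> V -> V) : Prop :=
  [/\ (forall (a : R) (x y z : V), br (a *: x + y) z = a *: br x z + br y z),
      (forall (a : R) (x y z : V), br x (a *: y + z) = a *: br x y + br x z),
      (forall x : V, br x x = 0) &
      (forall x y z : V, br x (br y z) + br y (br z x) + br z (br x y) = 0)].

Definition in_center (br : V -> V -> V) (x : V) : Prop :=
  forall y : V, br x y = 0.

Definition two_step_nilpotent (br : V -> V -> V) : Prop :=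
  (exists x y : V, br x y <> 0) /\ (forall x y z : V, br x (br y z) = 0).

Definition nonsingular (br : V -> V -> V) : Prop :=
  forall x : V, ~ in_center br x ->
    forall z : V, in_center br z -> exists y : V, br x y = z.

Definition ad_invariant_metric (br : V -> V -> V) (B : V -> V -> R) : Prop :=
  [/\ (forall (a : R) (x y z : V), B (a *: x + y) z = a * B x z + B y z),
      (forall x y : V, B x y = B y x),
      (forall x : V, (forall y : V, B x y = 0) -> x = 0) &
      (forall x y z : V, B (br x y) z + B y (br x z) = 0)].

End LieDefs.

(* Main.v *)
Require Import Defs.
From mathcomp Require Import all_boot all_order all_algebra.
From mathcomp Require Import reals.
Import GRing.Theory.
Local Open Scope ring_scope.

Theorem mainTheorem2 (R : realType) (V : vectType R) (br : V -> V -> V) :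
  is_lie_bracket br -> two_step_nilpotent br -> nonsingular br ->
  ~ (exists B : V -> V -> R, ad_invariant_metric br B).
Proof.
move=> [linl linr alt jac] [[x [y0 Hxy]] nil2] ns [B [Bl Bs Bnd Binv]].
have addl : forall u v w, br (u + v) w = br u w + br v w.
  by move=> u v w; have := linl 1 u v w; rewrite !scale1r.
have addr : forall u v w, br u (v + w) = br u v + br u w.
  by move=> u v w; have := linr 1 u v w; rewrite !scale1r.
have anti : forall u v, br u v = - br v u.
  move=> u v; have := alt (u + v).
  rewrite addl !addr alt alt add0r addr0 => /eqP.
  by rewrite addr_eq0 => /eqP.
have B0 : forall w, B 0 w = 0.
  move=> w; have := Bl 1 0 0 w; rewrite scale1r addr0 mul1r => h.
  by have := congr1 (fun t => t - B 0 w) h; rewrite /= subrr addrK => ->.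
apply: (Hxy).
have xc : forall a, br a x = 0.
  move=> a; apply: Bnd => b.
  have cen : in_center br (br a b).
    by move=> w; rewrite anti nil2 oppr0.
  have ncen : ~ in_center br x by move=> H; apply: Hxy; apply: H.
  have [y' Hy'] := ns x ncen _ cen.
  have h1 := Binv a x b.
  have h2 := Binv x x y'.
  rewrite alt B0 add0r Hy' in h2.
  by rewrite h2 addr0 in h1.
by rewrite anti xc oppr0.
Qed.
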